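(* Let $H\ge1$, $d_0=d_x$, $d_{H+1}=d_y$, and widths $d_1,\dots,d_H$ with $d_j\ge\min\{d_x,d_y\}$ for all $j$. For $W_j\in\mathbb{R}^{d_j\times d_{j-1}}$, $j\in[H+1]$, write $W_{i:j}=W_iW_{i-1}\cdots W_j$ for $i\ge j$ and $W_{j-1:j}=I$. Let $\ell_0:\mathbb{R}^{d_y\times d_x}\to\mathbb{R}$ be differentiable and define $\ell((W_j)_{j=1}^{H+1})=\ell_0(W_{H+1:1})$. Let $(\hat W_j)_{j=1}^{H+1}$ be any critical point of $\ell$. Then: 1. If $\nabla\ell_0(\hat W_{H+1:1})\ne0$, then $(\hat W_j)_{j=1}^{H+1}$ is a saddle point of $\ell$. 2. If $\nabla\ell_0(\hat W_{H+1:1})=0$, then (a) $(\hat W_j)_{j=1}^{H+1}$ is a local minimum (resp. maximum) of $\ell$ if $\hat W_{H+1:1}$ is a local minimum (resp. maximum) of $\ell_0$; and (b) $(\hat W_j)_{j=1}^{H+1}$ is a global minimum (resp. maximum) of $\ell$ if and only if $\hat W_{H+1:1}$ is a global minimum (resp. maximum) of $\ell_0$. 3. If there exists $j^*\in[H+1]$ such that $\hat W_{H+1:j^*+1}$ has full row rank and $\hat W_{j^*-1:1}$ has full column rank, then $\nabla\ell_0(\hat W_{H+1:1})=0$ (so 2(a) and 2(b) hold), and moreover (a) $\hat W_{H+1:1}$ is a local minimum (resp. maximum) of $\ell_0$ if $(\hat W_j)_{j=1}^{H+1}$ is a local minimum (resp. maximum) of $\ell$.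
   Context: $[a]=\{1,\dots,a\}$. A critical point of $\ell$ is a point where all partial derivatives $\partial\ell/\partial W_j$ vanish. A saddle point is a critical point that is neither a local minimum nor a local maximum. *)

(* Defs.v *)
From HB Require Import structures.
From mathcomp Require Import all_boot all_order all_algebra.
From mathcomp Require Import all_classical all_reals all_analysis.
Set Implicit Arguments. Unset Strict Implicit. Unset Printing Implicit Defensive.
Import Order.TTheory GRing.Theory Num.Theory.
Import numFieldNormedType.Exports.
Local Open Scope ring_scope.
Local Open Scope classical_set_scope.

(* Widths are a function d : nat -> nat with d 0 = d_x and
   d (H+1) = d_y.  The paper's weight W_{k+1} (k = 0..H), of size
   d_{k+1} x d_k, is stored at index k : 'I_(H.+1). *)

Section DeepLinear.
Variables (R : realType) (H : nat) (d : nat -> nat).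

Definition params := prod_topology (fun j : 'I_(H.+1) => 'M[R]_(d j.+1, d j)).

Definition extW (W : params) (k : nat) : 'M[R]_(d k.+1, d k) :=
  (if (k < H.+1)%N as b return (k < H.+1)%N = b -> 'M[R]_(d k.+1, d k)
   then fun h => W (Ordinal h) else fun _ => 0) (erefl (k < H.+1)%N).

(* prodTo W j i = (paper) W_{i:j+1} = W_i W_{i-1} ... W_{j+1}  for i >= j,
   of size d_i x d_j; prodTo W j j = identity (paper: W_{j:j+1} = I). *)
Fixpoint prodTo (W : params) (j i : nat) : 'M[R]_(d i, d j) :=
  match i with
  | 0 => pid_mx (d 0)
  | i'.+1 => if (j <= i')%N then extW W i' *m prodTo W j i' else pid_mx (d i'.+1)
  end.

Definition fullprod (W : params) : 'M[R]_(d H.+1, d 0) := prodTo W 0 H.+1.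

Definition ell (ell0 : 'M[R]_(d H.+1, d 0) -> R) (W : params) : R :=
  ell0 (fullprod W).

End DeepLinear.

Section Extrema.
Variables (T : topologicalType) (R : realType) (f : T -> R) (x : T).
Definition local_min := \forall y \near x, f x <= f y.
Definition local_max := \forall y \near x, f y <= f x.
Definition global_min := forall y, f x <= f y.
Definition global_max := forall y, f y <= f x.
End Extrema.

Definition critical_point (R : realType) (H : nat) (d : nat -> nat)
  (f : params R H d -> R) (W : params R H d) : Prop :=
  forall j : 'I_(H.+1),
    forall V : 'M[R]_(d j.+1, d j),
      'd (fun X : 'M[R]_(d j.+1, d j) => f (@dfwith _ (fun k : 'I_(H.+1) => 'M[R]_(d k.+1, d k)) W j X)) (W j) V = 0.

Definition saddle_point (R : realType) (H : nat) (d : nat -> nat)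
  (f : params R H d -> R) (W : params R H d) : Prop :=
  critical_point f W /\ ~ local_min f W /\ ~ local_max f W.

Definition grad_zero (R : realType) (m n : nat) (g : 'M[R]_(m, n) -> R)
  (M : 'M[R]_(m, n)) : Prop := forall V : 'M[R]_(m, n), 'd g M V = 0.

(* Main.v *)
Require Import Defs.
From HB Require Import structures.
From mathcomp Require Import all_boot all_order all_algebra.
From mathcomp Require Import all_classical all_reals all_analysis.
Import Order.TTheory GRing.Theory Num.Theory.
Import numFieldNormedType.Exports.
Local Open Scope ring_scope.
Local Open Scope classical_set_scope.
Set Implicit Arguments. Unset Strict Implicit. Unset Printing Implicit Defensive.
Section Alg.
Variables (R : realType) (H : nat) (d : nat -> nat).
Implicit Types W : params R H d.

Lemma extW_lt W k (h : (k < H.+1)%N) : extW W k = W (Ordinal h).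
Proof.
rewrite /extW.
have e : forall b (e : (k < H.+1)%N = b),
  (if b as b' return (k < H.+1)%N = b' -> 'M[R]_(d k.+1, d k)
   then fun h => W (Ordinal h) else fun _ => 0) e = W (Ordinal h).
  by move=> [] e; [rewrite (eq_irrelevance e h) | move: e; rewrite h].
exact: e.
Qed.

Lemma extW_ord W (k : 'I_H.+1) : extW W k = W k.
Proof. by case: k => k hk; rewrite (extW_lt W hk). Qed.

Lemma extW_ge W k : (H.+1 <= k)%N -> extW W k = 0.
Proof.
move=> hk; rewrite /extW.
have e : forall b (e : (k < H.+1)%N = b),
  (if b as b' return (k < H.+1)%N = b' -> 'M[R]_(d k.+1, d k)
   then fun h => W (Ordinal h) else fun _ => 0) e = 0.
  by move=> [] e //; exfalso; move: e; rewrite ltnNge hk.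
exact: e.
Qed.

Lemma extW_dfwith_eq W (k : 'I_H.+1) X : extW (dfwith W k X) k = X.
Proof. by rewrite extW_ord dfwithin. Qed.

Lemma extW_dfwith_neq W (k : 'I_H.+1) X (i : nat) : i != k ->
  extW (dfwith W k X) i = extW W i.
Proof.
move=> ik; case: (ltnP i H.+1) => hi; last by rewrite !extW_ge.
rewrite !(extW_lt _ hi) dfwithout //.
by apply: contra ik => /eqP ->.
Qed.

Lemma dfwith_self W (k : 'I_H.+1) : dfwith W k (W k) = W.
Proof.
apply: functional_extensionality_dep => j.
by case: dfwithP => // ->.
Qed.

Lemma prodTo_id W j : prodTo W j j = 1%:M.
Proof. by case: j => [|j] /=; rewrite ?ltnn pid_mx_1. Qed.

Lemma prodToS W j i : (j <= i)%N -> prodTo W j i.+1 = extW W i *m prodTo W j i.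
Proof. by move=> h /=; rewrite h. Qed.

Lemma prodTo_split W j k i : (j <= k)%N -> (k <= i)%N ->
  prodTo W j i = prodTo W k i *m prodTo W j k.
Proof.
move=> jk; elim: i => [|i IH].
  rewrite leqn0 => /eqP k0; subst k.
  by rewrite prodTo_id mul1mx.
rewrite leq_eqVlt => /orP [/eqP ki | ki].
  by subst k; rewrite prodTo_id mul1mx.
have ki' : (k <= i)%N by []. rewrite (@prodToS W j i (leq_trans jk ki')) (@prodToS W k i ki').
by rewrite IH // mulmxA.
Qed.

Lemma prodTo_ext W W' j i : (forall k, (j <= k)%N -> (k < i)%N -> extW W k = extW W' k) ->
  prodTo W j i = prodTo W' j i.
Proof.
elim: i => [|i IH] h //=.
case: ifP => // ji; rewrite h // IH // => k jk ki; apply: h => //.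
exact: ltnW.
Qed.

Lemma fullprod_dfwith W (k : 'I_H.+1) X :
  fullprod (dfwith W k X) = prodTo W k.+1 H.+1 *m X *m prodTo W 0 k.
Proof.
rewrite /fullprod (@prodTo_split _ 0 k.+1 H.+1) // (@prodToS _ 0 k) //.
rewrite extW_dfwith_eq mulmxA; congr (_ *m _ *m _); apply: prodTo_ext.
  by move=> i ki _; rewrite extW_dfwith_neq // neq_ltn ltnNge ki orbT.
by move=> i _ ik; rewrite extW_dfwith_neq // neq_ltn ik.
Qed.

Lemma fullprod_split W (k : 'I_H.+1) :
  fullprod W = prodTo W k.+1 H.+1 *m W k *m prodTo W 0 k.
Proof. by rewrite -{1}(dfwith_self W k) fullprod_dfwith. Qed.

End Alg.

Section Cont.
Variable R : realType.

Lemma mx_cont_at (T : topologicalType) m n (f : T -> 'M[R]_(m, n)) x :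
  (forall i j, {for x, continuous (fun y => f y i j)}) -> {for x, continuous f}.
Proof.
move=> h A /nbhs_ballP [e e0 hA].
have : \forall y \near x, forall ij : 'I_m * 'I_n, ball (f x ij.1 ij.2) e (f y ij.1 ij.2).
  apply: filter_forall => -[i j] /=.
  exact: (cvg_ball (h i j) e0).
apply: filterS => y hy; apply: hA.
split => // i j; exact: (hy (i, j)).
Qed.

Lemma cont_sum_seq (T : topologicalType) (I : Type) (s : seq I) (F : I -> T -> R) x :
  (forall k, {for x, continuous (F k)}) ->
  {for x, continuous (fun y => \sum_(k <- s) F k y)}.
Proof.
move=> h; elim: s => [|a s IH].
  rewrite (_ : (fun y => _) = fun _ => 0); first exact: cst_continuous.
  by apply: funext => y; rewrite big_nil.
rewrite (_ : (fun y => _) = F a + (fun y => \sum_(k <- s) F k y)).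
  by apply: cvgD; [exact: h | exact: IH].
by apply: funext => y; rewrite big_cons.
Qed.

Lemma mulmx_cont_at (T : topologicalType) m n p (f : T -> 'M[R]_(m, n))
  (g : T -> 'M[R]_(n, p)) x :
  {for x, continuous f} -> {for x, continuous g} ->
  {for x, continuous (fun y => f y *m g y)}.
Proof.
move=> cf cg; apply: mx_cont_at => i j.
rewrite (_ : (fun y => _) = fun y => \sum_k f y i k * g y k j); last first.
  by apply: funext => y; rewrite mxE.
apply: cont_sum_seq => k; apply: cvgM.
  exact: (continuous_comp cf (@coord_continuous R m n i k (f x))).
exact: (continuous_comp cg (@coord_continuous R n p k j (g x))).
Qed.

Variables (H : nat) (d : nat -> nat).

Lemma extW_cont k : continuous (fun W : params R H d => extW W k).
Proof.
case: (ltnP k H.+1) => hk.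
  rewrite (_ : (fun W => extW W k) = fun W => W (Ordinal hk)).
    exact: (@proj_continuous _ _ (Ordinal hk)).
  by apply: funext => W; rewrite (extW_lt W hk).
rewrite (_ : (fun W => extW W k) = fun W => 0); first exact: cst_continuous.
by apply: funext => W; rewrite extW_ge.
Qed.

Lemma prodTo_cont j i : continuous (fun W : params R H d => prodTo W j i).
Proof.
elim: i => [|i IH]; first exact: cst_continuous.
have [ji|ij] := leqP j i.
  rewrite (_ : (fun W => _) = fun W => extW W i *m prodTo W j i); last first.
    by apply: funext => W; rewrite prodToS.
  move=> W; apply: mulmx_cont_at; [exact: extW_cont | exact: IH].
rewrite (_ : (fun W => _) = fun W => pid_mx (d i.+1)); first exact: cst_continuous.
by apply: funext => W /=; rewrite leqNgt ij.
Qed.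

Lemma fullprod_cont : continuous (fun W : params R H d => fullprod W).
Proof. exact: prodTo_cont. Qed.

End Cont.

Section Anal.
Variables (R : realType) (H : nat) (d : nat -> nat).
Variable ell0 : 'M[R]_(d H.+1, d 0%N) -> R.
Hypothesis hdiff : forall M, differentiable ell0 M.

Lemma dfw_cvg (W : params R H d) (k : 'I_H.+1) (E : 'M[R]_(d k.+1, d k)) :
  dfwith W k (W k + t *: E) @[t --> (0:R)] --> W.
Proof.
suff : (dfwith W k (W k + t *: E) : params R H d) @[t --> (0:R)] --> (dfwith W k (W k) : params R H d) by rewrite dfwith_self.
have h1 : W k + t *: E @[t --> (0:R)] --> W k.
  have := cvgD (cvg_cst (W k)) (cvgZl (a := E) (@cvg_id _ (nbhs (0:R)))).
  by rewrite scale0r addr0; apply.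
apply: (continuous_cvg _ _ h1); exact: dfwith_continuous.
Qed.

Lemma nonzero_near (P : R -> Prop) : (\forall t \near (0:R), P t) ->
  exists2 t, t != 0 & P t.
Proof.
move/nbhs_ballP => [e e0 h]; exists (e / 2).
  by rewrite mulf_neq0 // ?gt_eqF // invr_eq0 pnatr_eq0.
apply: h; rewrite /ball /= sub0r normrN gtr0_norm ?divr_gt0 //.
by rewrite ltr_pdivrMr // ltr_pMr // ltr1n.
Qed.

Lemma crit_of_lmin (W : params R H d) (k : 'I_H.+1) V :
  local_min (ell ell0) W ->
  'd ell0 (fullprod W) (prodTo W k.+1 H.+1 *m V *m prodTo W 0 k) = 0.
Proof.
move=> lm.
set M := fullprod W; set D := _ *m V *m _.
pose g := fun t : R => ell0 (M + t *: D).
have gE : forall t, g t = ell ell0 (dfwith W k (W k + t *: V)).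
  move=> t; rewrite /g /ell fullprod_dfwith /M (fullprod_split W k).
  by rewrite mulmxDr mulmxDl -scalemxAr -scalemxAl.
have gmin : \forall t \near (0:R), g 0 <= g t.
  have h := dfw_cvg (W:=W) V lm.
  near=> t; rewrite !gE scale0r addr0 dfwith_self.
  near: t; exact h.
move/nbhs_ballP: gmin => [e e0 he].
have dg : forall t, derivable g t 1.
  move=> t; apply: diff_derivable.
  apply: (@differentiable_comp _ _ _ _ (fun t : R => M + t *: D) ell0).
    apply: differentiableD; first exact: differentiable_cst.
    exact: differentiableZl.
  exact: hdiff.
have hd0 : is_derive (0:R) 1 g 0.
  apply: (@derive1_at_min R g (- e) e 0).
  - by apply: (@le_trans _ _ 0); rewrite ?oppr_le0 ltW.
  - by move=> t _; exact: dg.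
  - by rewrite in_itv /= oppr_lt0 e0.
  - move=> t; rewrite in_itv /= => /andP [h1 h2]; apply: he.
    by rewrite /ball /= sub0r normrN ltr_norml h1 h2.
have := @derive_val _ _ _ _ _ _ _ hd0.
rewrite -deriveE; last exact: hdiff.
move=> <-; rewrite /derive.
have -> : (fun h : R => h^-1 *: ((g \o shift 0) h%:A - g 0)) =
  (fun h => h^-1 *: ((ell0 \o shift M) (h *: D) - ell0 M)); last by [].
apply: funext => h /=.
rewrite /g /shift /= addr0 scale0r addr0 -[h%:A]/(h * 1) mulr1 (addrC (h *: D)).
Unshelve. all: by end_near. Qed.

End Anal.


Section LinAlg.
Variable R : realType.

Lemma ker_vec m n (A : 'M[R]_(m, n)) : (\rank A < m)%N ->
  exists2 u : 'rV[R]_m, u != 0 & u *m A = 0.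
Proof.
move=> rA.
have K0 : kermx A != 0.
  apply/negP => /eqP K0; move: (mxrank_ker A); rewrite K0 mxrank0 => /esym/eqP.
  by rewrite subn_eq0 leqNgt rA.
have [i ri] : exists i, row i (kermx A) != 0.
  apply/existsP; apply: contraR K0; rewrite negb_exists => /forallP h.
  by apply/eqP/row_matrixP => i; rewrite row0; apply/eqP; move: (h i); rewrite negbK.
by exists (row i (kermx A)) => //; rewrite -row_mul mulmx_ker row0.
Qed.

Lemma uuT_ne0 n (u : 'rV[R]_n) : u != 0 -> (u *m u^T) 0 0 != 0.
Proof.
move=> u0; apply: contra u0 => /eqP h; apply/eqP/rowP => j.
have : (u 0 j) ^+ 2 = 0.
  move: h; rewrite mxE => /psumr_eq0P h'.
  have := h' _ j isT; rewrite mxE expr2; apply.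
  by move=> l _; rewrite mxE -expr2 sqr_ge0.
by move/eqP; rewrite sqrf_eq0 mxE => /eqP.
Qed.

Lemma uuT_scalar n (u : 'rV[R]_n) : u *m u^T = ((u *m u^T) 0 0)%:M.
Proof. exact: mx11_scalar. Qed.

Lemma rinv_ex m n (A : 'M[R]_(m, n)) : \rank A = m ->
  exists (Ar : 'M[R]_(n, m)), A *m Ar = 1%:M.
Proof.
move=> hA.
have rf : row_full A^T by rewrite /row_full mxrank_tr hA.
exists (pinvmx A^T)^T.
have := mulmxKpV (submx_full (@scalar_mx R m 1) rf); rewrite mul1mx => h.
by rewrite -{1}[A]trmxK -trmx_mul h trmx1.
Qed.

Lemma linv_ex n p (B : 'M[R]_(n, p)) : \rank B = p ->
  exists (Bl : 'M[R]_(p, n)), Bl *m B = 1%:M.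
Proof.
move=> hB.
have rf : row_full B by rewrite /row_full hB.
exists (pinvmx B).
by have := mulmxKpV (submx_full (@scalar_mx R p 1) rf); rewrite mul1mx.
Qed.

End LinAlg.

Section Propag.
Variables (R : realType) (H : nat) (d : nat -> nat).
Variable ell0 : 'M[R]_(d H.+1, d 0%N) -> R.
Hypothesis hdiff : forall M, differentiable ell0 M.
Variable W0 : params R H d.
Hypothesis lm0 : local_min (ell ell0) W0.

Definition Qp (W : params R H d) := \forall y \near W, ell ell0 W0 <= ell ell0 y.
Definition Sp (W : params R H d) := Qp W /\ fullprod W = fullprod W0.

Lemma S_W0 : Sp W0.
Proof. by split. Qed.

Lemma S_lmin W : Sp W -> local_min (ell ell0) W.
Proof. move=> [q e]; near=> y; rewrite /ell e; near: y; exact q. Unshelve. all: by end_near. Qed.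

Lemma S_move W (k : 'I_H.+1) E : Sp W ->
  prodTo W k.+1 H.+1 *m E *m prodTo W 0 k = 0 ->
  exists2 t : R, t != 0 & Sp (dfwith W k (W k + t *: E)).
Proof.
move=> [q e] AEB.
have qq := near_join q.
have h := dfw_cvg (W:=W) E qq.
have [t t0 ht] := nonzero_near h.
exists t => //; split => //.
rewrite fullprod_dfwith mulmxDr mulmxDl -scalemxAr -scalemxAl AEB scaler0 addr0.
by rewrite -fullprod_split.
Qed.

Lemma crit_S W (k : 'I_H.+1) V : Sp W ->
  'd ell0 (fullprod W0) (prodTo W k.+1 H.+1 *m V *m prodTo W 0 k) = 0.
Proof.
move=> sW; have := crit_of_lmin hdiff V (S_lmin sW).
by case: sW => _ ->.
Qed.

Notation phi := ('d ell0 (fullprod W0)).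

Lemma lin_delta_r n (B : 'M[R]_(n, d 0%N)) :
  (forall (i : 'I_(d H.+1)) (j : 'I_n), phi (delta_mx i j *m B) = 0) ->
  forall Z : 'M[R]_(d H.+1, n), phi (Z *m B) = 0.
Proof.
move=> h Z; rewrite (matrix_sum_delta Z) mulmx_suml linear_sum big1 // => i _.
rewrite mulmx_suml linear_sum big1 // => j _.
by rewrite -scalemxAl linearZ /= h scaler0.
Qed.

Lemma lin_delta_l n (A : 'M[R]_(d H.+1, n)) :
  (forall (i : 'I_n) (j : 'I_(d 0%N)), phi (A *m delta_mx i j) = 0) ->
  forall Z : 'M[R]_(n, d 0%N), phi (A *m Z) = 0.
Proof.
move=> h Z; rewrite (matrix_sum_delta Z) mulmx_sumr linear_sum big1 // => i _.
rewrite mulmx_sumr linear_sum big1 // => j _.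
by rewrite -scalemxAr linearZ /= h scaler0.
Qed.

Lemma extW_dfwith_eq' (W : params R H d) k (hk : (k < H.+1)%N) X :
  extW (dfwith W (Ordinal hk) X) k = X.
Proof. by rewrite (extW_lt _ hk) dfwithin. Qed.

Lemma claim_down (hmin : forall j, (1 <= j <= H)%N -> (d H.+1 <= d j)%N) :
  forall n k, (k + n = H)%N -> forall W, Sp W ->
  forall Z : 'M[R]_(d H.+1, d k), phi (Z *m prodTo W 0 k) = 0.
Proof.
elim => [|n IH] k hk W sW.
  have e : k = H by rewrite -hk addn0.
  subst k => Z.
  have := crit_S (k := ord_max) Z sW.
  by rewrite /= ltnn pid_mx_1 mul1mx.
have kH : (k < H)%N by rewrite -hk -addSnnS leq_addr.
have kH1 : (k < H.+1)%N by apply: ltnW.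
pose ko := Ordinal kH1.
have IH' : forall W, Sp W -> forall Z : 'M[R]_(d H.+1, d k.+1), phi (Z *m prodTo W 0 k.+1) = 0 by apply: IH; rewrite addSnnS.
set A := prodTo W k.+1 H.+1; set B := prodTo W 0 k.
have hB : forall W' : params R H d, prodTo W' 0 k.+1 = extW W' k *m prodTo W' 0 k.
  by [].
case: (ltnP (\rank A) (d k.+1)) => rA.
- have [u u0 uA] : exists2 u : 'rV[R]_(d k.+1), u != 0 & u *m A^T = 0.
    by apply: ker_vec; rewrite mxrank_tr.
  have Au : A *m u^T = 0 by rewrite -[A]trmxK -trmx_mul uA trmx0.
  apply: lin_delta_r => i j.
  pose E := u^T *m (delta_mx 0 j : 'rV[R]_(d k)).
  have AEB : prodTo W ko.+1 H.+1 *m E *m prodTo W 0 ko = 0.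
    by rewrite /E /= -/A mulmxA Au !mul0mx.
  have [t t0 sW'] := S_move (k:=ko) (E:=E) sW AEB.
  set c := (u *m u^T) 0 0.
  have c0 : c != 0 by apply: uuT_ne0.
  pose Z' := c^-1 *: ((delta_mx i 0 : 'cV[R]_(d H.+1)) *m u).
  have h1 := IH' _ sW' Z'.
  have h2 := IH' _ sW Z'.
  rewrite !hB extW_dfwith_eq' in h1.
  rewrite (@prodTo_ext R H d (dfwith W ko (W ko + t *: E)) W 0 k) in h1; last first.
    move=> l _ lk; rewrite extW_dfwith_neq //.
    by rewrite neq_ltn lk.
  rewrite hB (extW_lt W kH1) in h2.
  have h2' : phi (Z' *m (W ko *m B)) = 0 := h2.
  move: h1; rewrite -/B mulmxDl mulmxDr linearD /= h2' add0r.
  rewrite -scalemxAl -scalemxAr linearZ /= => /eqP; rewrite mulf_eq0 (negbTE t0) /= => /eqP.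
  suff -> : Z' *m (E *m B) = delta_mx i j *m B by [].
  rewrite /Z' /E -scalemxAl !mulmxA -(mulmxA _ u) uuT_scalar -/c mul_mx_scalar.
  by rewrite -scalemxAl -scalemxAl scalerA mulVf // scale1r mul_delta_mx.
- have rA' : \rank A = d H.+1.
    apply/eqP; rewrite eqn_leq rank_leq_row /=.
    apply: leq_trans rA; apply: hmin; rewrite kH andbT //.
  have [Ar hAr] := rinv_ex rA'.
  move=> Z; have := crit_S (k := ko) (Ar *m Z) sW.
  by rewrite /= -/A mulmxA hAr mul1mx.
Qed.

Lemma claim_up (hmin : forall j, (1 <= j <= H)%N -> (d 0%N <= d j)%N) :
  forall k, (k <= H)%N -> forall W, Sp W ->
  forall Z : 'M[R]_(d k.+1, d 0%N), phi (prodTo W k.+1 H.+1 *m Z) = 0.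
Proof.
elim => [|k IH] hk W sW.
  move=> Z; have := crit_S (k := ord0) Z sW.
  by rewrite /= pid_mx_1 mulmx1.
have kH1 : (k.+1 < H.+1)%N by [].
pose ko := Ordinal kH1.
have IH' := IH (ltnW hk).
set A := prodTo W k.+2 H.+1; set B := prodTo W 0 k.+1.
have hA : forall W' : params R H d,
    prodTo W' k.+1 H.+1 = prodTo W' k.+2 H.+1 *m extW W' k.+1.
  move=> W'; rewrite (@prodTo_split R H d W' k.+1 k.+2 H.+1) //.
  by rewrite (@prodToS R H d W' k.+1 k.+1 (leqnn _)) prodTo_id mulmx1.
case: (ltnP (\rank B) (d k.+1)) => rB.
- have [v v0 vB] := ker_vec rB.
  apply: lin_delta_l => i j.
  pose E := (delta_mx i 0 : 'cV[R]_(d k.+2)) *m v.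
  have AEB : prodTo W ko.+1 H.+1 *m E *m prodTo W 0 ko = 0.
    by rewrite /E /= -/B -!mulmxA vB !mulmx0.
  have [t t0 sW'] := S_move (k:=ko) (E:=E) sW AEB.
  set c := (v *m v^T) 0 0.
  have c0 : c != 0 by apply: uuT_ne0.
  pose Z' := c^-1 *: (v^T *m (delta_mx 0 j : 'rV[R]_(d 0%N))).
  have h1 := IH' _ sW' Z'.
  have h2 := IH' _ sW Z'.
  rewrite !hA extW_dfwith_eq' in h1.
  rewrite (@prodTo_ext R H d (dfwith W ko (W ko + t *: E)) W k.+2 H.+1) in h1; last first.
    move=> l kl _; rewrite extW_dfwith_neq //.
    by rewrite neq_ltn kl orbT.
  rewrite hA (extW_lt W kH1) in h2.
  have h2' : phi (A *m W ko *m Z') = 0 := h2.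
  move: h1; rewrite -/A mulmxDr mulmxDl linearD /= h2' add0r.
  rewrite -(scalemxAr t) -(scalemxAl t) linearZ /= => /eqP; rewrite mulf_eq0 (negbTE t0) /= => /eqP.
  suff -> : A *m E *m Z' = A *m delta_mx i j by [].
  rewrite /Z' /E -!mulmxA; congr (A *m _).
  rewrite -scalemxAr mulmxA uuT_scalar -/c mul_scalar_mx -scalemxAr.
  by rewrite -scalemxAr scalerA mulVf // scale1r mul_delta_mx.
- have rB' : \rank B = d 0%N.
    apply/eqP; rewrite eqn_leq rank_leq_col /=.
    apply: leq_trans rB; apply: hmin; rewrite hk andbT //.
  have [Bl hBl] := linv_ex rB'.
  move=> Z; have := crit_S (k := ko) (Z *m Bl) sW.
  by rewrite /= -/A -/B -mulmxA -(mulmxA Z) hBl mulmx1.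
Qed.

End Propag.

Section Final.
Variables (R : realType) (H : nat) (d : nat -> nat).
Variable ell0 : 'M[R]_(d H.+1, d 0%N) -> R.
Hypothesis hdiff : forall M, differentiable ell0 M.

Lemma lmin_grad (hd : forall j : nat, (1 <= j <= H)%N -> (minn (d 0%N) (d H.+1) <= d j)%N)
  (W0 : params R H d) : local_min (ell ell0) W0 -> grad_zero ell0 (fullprod W0).
Proof.
move=> lm V.
case: (leqP (d H.+1) (d 0%N)) => h.
  have hmin : forall j, (1 <= j <= H)%N -> (d H.+1 <= d j)%N.
    by move=> j /hd; rewrite (minn_idPr h).
  have := claim_down hdiff hmin (n := H) (k := 0) (add0n H) (S_W0 lm) V.
  by rewrite prodTo_id mulmx1.
have hmin : forall j, (1 <= j <= H)%N -> (d 0%N <= d j)%N.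
  by move=> j /hd; rewrite (minn_idPl (ltnW h)).
have := claim_up hdiff hmin (k := H) (leqnn H) (S_W0 lm) V.
by rewrite prodTo_id mul1mx.
Qed.

Lemma dpartial (W : params R H d) (k : 'I_H.+1) V :
  'd (fun X : 'M[R]_(d k.+1, d k) => ell ell0 (@dfwith _ (fun k : 'I_(H.+1) => 'M[R]_(d k.+1, d k)) W k X)) (W k) V =
  'd ell0 (fullprod W) (prodTo W k.+1 H.+1 *m V *m prodTo W 0 k).
Proof.
set A := prodTo W k.+1 H.+1; set B := prodTo W 0 k.
pose L : {linear 'M[R]_(d k.+1, d k) -> 'M[R]_(d H.+1, d 0%N)} := mulmxr B \o mulmx A.

have LE : forall X, L X = A *m X *m B by [].

have cL : continuous L.
  move=> X; rewrite (_ : (L : _ -> _) = fun X => A *m X *m B); last by apply: funext.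
  apply: mulmx_cont_at; last exact: cst_continuous.
  apply: mulmx_cont_at; [exact: cst_continuous | exact: cvg_id].

have fE : (fun X : 'M[R]_(d k.+1, d k) => ell ell0 (dfwith W k X)) = ell0 \o L.
  by apply: funext => X; rewrite /ell fullprod_dfwith.

rewrite fE.

rewrite diff_comp; last first.
- exact: hdiff.
- exact: linear_differentiable.

have dL : ('d L (W k) : _ -> _) = L := diff_lin (W k) cL.

have e1 : 'd L (W k) V = A *m V *m B by rewrite dL.

have e2 : L (W k) = fullprod W by rewrite LE -(fullprod_split W k).

change ('d ell0 (L (W k)) ('d L (W k) V) = 'd ell0 (fullprod W) (A *m V *m B)).

by rewrite e1 e2.
Qed.

Lemma prodTo_pid (W : params R H d) j r : forall i,
  (forall k, (j <= k)%N -> (k < i)%N -> (r <= d k)%N /\ extW W k = pid_mx r) ->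
  (j < i)%N -> prodTo W j i = pid_mx r.
Proof.
elim => [|i IH] h ji //.
rewrite prodToS //.
have [hr he] := h i ji (ltnSn i).
rewrite he; move: ji; rewrite ltnS leq_eqVlt => /orP [/eqP ji | ji].
  subst j; rewrite prodTo_id -(@pid_mx_1 _ (d i)) mul_pid_mx.
  by rewrite (minn_idPl hr) (minn_idPr hr).
rewrite IH //; last by move=> l jl li; apply: h => //; apply: ltnW.
by rewrite mul_pid_mx minnn (minn_idPr hr).
Qed.

Lemma fullprod_surj (hH : (1 <= H)%N)
  (hd : forall j : nat, (1 <= j <= H)%N -> (minn (d 0%N) (d H.+1) <= d j)%N)
  (N : 'M[R]_(d H.+1, d 0%N)) : exists W : params R H d, fullprod W = N.
Proof.
case: (leqP (d H.+1) (d 0%N)) => h.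
  have hmin : forall j, (1 <= j <= H)%N -> (d H.+1 <= d j)%N.
    by move=> j /hd; rewrite (minn_idPr h).
  pose P : params R H d := fun k => pid_mx (d H.+1).
  exists (dfwith P ord0 (pid_mx (d H.+1) *m N)).
  rewrite fullprod_dfwith (prodTo_id P 0) mulmx1.
  rewrite (@prodTo_pid P 1 (d H.+1) H.+1); last by [].
    rewrite mulmxA mul_pid_mx minnn (minn_idPr (hmin 1%N _)) ?hH //.
    by rewrite pid_mx_1 mul1mx.
  move=> l l1 lH; split; first by apply: hmin; rewrite l1.
  by rewrite (extW_lt _ lH).
have hmin : forall j, (1 <= j <= H)%N -> (d 0%N <= d j)%N.
  by move=> j /hd; rewrite (minn_idPl (ltnW h)).
pose P : params R H d := fun k => pid_mx (d 0%N).
exists (dfwith P ord_max (N *m pid_mx (d 0%N))).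
rewrite fullprod_dfwith /= ltnn pid_mx_1 mul1mx.
rewrite (@prodTo_pid P 0 (d 0%N) H); last by [].
  by rewrite -mulmxA mul_pid_mx minnn (minn_idPr (hmin H _)) ?hH ?leqnn // pid_mx_1 mulmx1.
move=> l _ lH; split.
  by case: l lH => [|l] lH //; apply: hmin; rewrite /= ltnW.
by rewrite (extW_lt _ (ltnW lH)).
Qed.

Lemma loc_surj (W : params R H d) (k : 'I_H.+1) :
  \rank (prodTo W k.+1 H.+1) = d H.+1 -> \rank (prodTo W 0 k) = d 0%N ->
  exists g : 'M[R]_(d H.+1, d 0%N) -> params R H d,
    (forall N, fullprod (g N) = N) /\ g N @[N --> fullprod W] --> W.
Proof.
move=> rA rB.
have [Ar hAr] := rinv_ex rA; have [Bl hBl] := linv_ex rB.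
set A := prodTo W k.+1 H.+1 in hAr *; set B := prodTo W 0 k in hBl *.
exists (fun N => dfwith W k (W k + Ar *m (N - fullprod W) *m Bl)); split.
  move=> N; rewrite fullprod_dfwith -/A -/B mulmxDr mulmxDl -(fullprod_split W k).
  by rewrite !mulmxA hAr mul1mx -mulmxA hBl mulmx1 addrC subrK.
pose f1 := fun N : 'M[R]_(d H.+1, d 0%N) => W k + Ar *m (N - fullprod W) *m Bl.
suff : (dfwith W k (f1 N) : params R H d)
   @[N --> fullprod W] --> (dfwith W k (W k) : params R H d) by rewrite dfwith_self.
have h1 : f1 N @[N --> fullprod W] --> W k.
  have c0 : {for fullprod W, continuous (fun N : 'M[R]_(d H.+1, d 0%N) => N - fullprod W)}.
    exact: (cvgB (@cvg_id _ (nbhs (fullprod W))) (cvg_cst (fullprod W))).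
  have c1 : {for fullprod W, continuous (fun N : 'M[R]_(d H.+1, d 0%N) => Ar *m (N - fullprod W) *m Bl)}.
    apply: mulmx_cont_at; last exact: cst_continuous.
    by apply: mulmx_cont_at; first exact: cst_continuous.
  have c : {for fullprod W, continuous f1}.
    exact: (cvgD (cvg_cst (W k)) c1).
  by move: c; rewrite /prop_for /continuous_at /f1 subrr mulmx0 mul0mx addr0.
by apply: (continuous_cvg _ _ h1); exact: dfwith_continuous.
Qed.
End Final.

Theorem theorem3 (R : realType) (H : nat) (d : nat -> nat)
  (hH : (1 <= H)%N)
  (hd : forall j : nat, (1 <= j <= H)%N -> (minn (d 0%N) (d H.+1) <= d j)%N)
  (ell0 : 'M[R]_(d H.+1, d 0%N) -> R)
  (hdiff : forall M : 'M[R]_(d H.+1, d 0%N), differentiable ell0 M)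
  (What : params R H d)
  (hcrit : critical_point (ell ell0) What) :
  (* 1. *)
  (~ grad_zero ell0 (fullprod What) -> saddle_point (ell ell0) What) /\
  (* 2. *)
  (grad_zero ell0 (fullprod What) ->
     ((local_min ell0 (fullprod What) -> local_min (ell ell0) What) /\
      (local_max ell0 (fullprod What) -> local_max (ell ell0) What)) /\
     ((global_min (ell ell0) What <-> global_min ell0 (fullprod What)) /\
      (global_max (ell ell0) What <-> global_max ell0 (fullprod What)))) /\
  (* 3. *)
  ((exists js : nat, (1 <= js <= H.+1)%N /\
       \rank (prodTo What js H.+1) = d H.+1 /\
       \rank (prodTo What 0 js.-1) = d 0%N) ->
     grad_zero ell0 (fullprod What) /\
     (local_min (ell ell0) What -> local_min ell0 (fullprod What)) /\
     (local_max (ell ell0) What -> local_max ell0 (fullprod What))).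
Proof.
split; [|split].
- move=> ng; split; first exact: hcrit.
  split.
    by move=> lm; apply: ng; exact: (lmin_grad hdiff hd lm).
  move=> lmax; apply: ng => V.
  pose ell1 := fun M : 'M[R]_(d H.+1, d 0%N) => - ell0 M.
  have hdiff1 : forall M, differentiable ell1 M.
    by move=> M; apply: differentiableN.
  have lm1 : local_min (ell ell1) What.
    near=> y; rewrite /ell /ell1 lerN2; near: y; exact: lmax.
  have := lmin_grad hdiff1 hd lm1 V.
  rewrite (_ : ell1 = - ell0) // diffN //= => /eqP; rewrite oppr_eq0 => /eqP.
  done.
- move=> hg; split; split.
  + move=> lm; exact: (fullprod_cont lm).
  + move=> lm; exact: (fullprod_cont lm).
  + split; first last.
      by move=> g y; exact: g.
    move=> g N; have [W' <-] := fullprod_surj hH hd N; exact: g.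
  + split; first last.
      by move=> g y; exact: g.
    move=> g N; have [W' <-] := fullprod_surj hH hd N; exact: g.
- move=> [js [/andP [js1 jsH] [rA rB]]]; case: js js1 jsH rA rB => [//|k] _ kH rA rB.
  pose ko := Ordinal kH.
  have [g [gN gc]] := loc_surj (k := ko) rA rB.
  split; [|split].
  + move=> Y.
    have [Ar hAr] := rinv_ex rA; have [Bl hBl] := linv_ex rB.
    have := hcrit ko (Ar *m Y *m Bl).
    rewrite dpartial // /= !mulmxA hAr mul1mx -mulmxA hBl mulmx1.
    done.
  + move=> lm; near=> N; rewrite -{1}(gN N); near: N; exact: (gc _ lm).
  + move=> lm; near=> N; rewrite -{1}(gN N); near: N; exact: (gc _ lm).
Unshelve. all: by end_near.
Qed.
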